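(* Let $G$ be a finite group such that $|Z(G)|$ has at least two distinct prime divisors. Then the difference graph $\mathcal{D}(G)$ is bipartite if and only if $G\cong\mathbb{Z}_{p^{\alpha}q}$, where $p,q$ are distinct primes and $\alpha\ge 1$.
   Context: For a finite group $G$ with identity $e$: the intersection power graph $\mathcal{G}_I(G)$ has vertex set $G$, two distinct non-identity vertices $x,y$ being adjacent iff $\langle x\rangle\cap\langle y\rangle\neq\{e\}$, and $e$ being adjacent to every other vertex. The power graph $\mathcal{P}(G)$ has vertex set $G$, two distinct vertices being adjacent iff one is a power of the other. The difference graph $\mathcal{D}(G)$ is the graph on vertex set $G$ with edge set $E(\mathcal{G}_I(G))\setminus E(\mathcal{P}(G))$, with all isolated vertices removed. $Z(G)$ denotes the center of $G$. *)

(* Defs.v *)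
From mathcomp Require Import all_boot all_fingroup all_algebra all_solvable.
Set Implicit Arguments. Unset Strict Implicit. Unset Printing Implicit Defensive.
Local Open Scope group_scope.

Section Graphs.
Variable gT : finGroupType.
Variable G : {group gT}.

Definition ipg_adj (x y : gT) : bool :=
  [&& x \in G, y \in G, x != y &
      [|| x == 1, y == 1 | <[x]> :&: <[y]> != 1]].

Definition pg_adj (x y : gT) : bool :=
  [&& x \in G, y \in G, x != y & (x \in <[y]>) || (y \in <[x]>)].

Definition diff_adj (x y : gT) : bool := ipg_adj x y && ~~ pg_adj x y.

Definition diff_vertices : {set gT} :=
  [set x in G | [exists y, diff_adj x y]].

Definition diff_bipartite : Prop :=
  exists A : {set gT}, A \subset diff_vertices /\
    forall x y, diff_adj x y -> (x \in A) != (y \in A).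
End Graphs.

(* Main.v *)
Require Import Defs.
From mathcomp Require Import all_boot all_fingroup all_algebra all_solvable.
From mathcomp Require Import zify.
Set Implicit Arguments. Unset Strict Implicit. Unset Printing Implicit Defensive.
Local Open Scope group_scope.

Section Aux.
Variable gT : finGroupType.
Implicit Types a b c d w x y : gT.

Lemma proj_mem (pi : nat_pred) a b : a \in <[b]> -> a.`_pi \in <[b.`_pi]>.
Proof. by case/cycleP=> k ->; rewrite consttX mem_cycle. Qed.

Lemma ord_mem a b : a \in <[b]> -> (#[a] %| #[b])%N.
Proof. by move=> h; apply: order_dvdG. Qed.

Variable G : {group gT}.

Lemma adjI a b w : a \in G -> b \in G -> w != 1 -> w \in <[a]> -> w \in <[b]> ->
  a \notin <[b]> -> b \notin <[a]> -> diff_adj G a b.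
Proof.
move=> aG bG w1 wa wb nab nba; rewrite /diff_adj /ipg_adj /pg_adj aG bG /=.
have ab : a != b by apply: contraNneq nab => ->; apply: cycle_id.
rewrite ab (negPf nab) (negPf nba) /= andbT.
apply/orP; right; apply/orP; right; apply/trivgPn; exists w => //.
by rewrite inE wa wb.
Qed.

Lemma diff_adj_sym a b : diff_adj G a b -> diff_adj G b a.
Proof.
rewrite /diff_adj /ipg_adj /pg_adj.
case/andP=> /and4P[aG bG ab h] np; apply/andP; split.
  apply/and4P; split => //; first by rewrite eq_sym.
  by rewrite setIC; move: h; case: (a == 1); case: (b == 1); rewrite ?orbT.
by move: np; rewrite aG bG [b == a]eq_sym ab orbC.
Qed.

Lemma no_tri a b c : diff_bipartite G -> diff_adj G a b -> diff_adj G b c ->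
  diff_adj G c a -> False.
Proof.
case=> A [_ HA] ab bc ca; move: (HA _ _ ab) (HA _ _ bc) (HA _ _ ca).
by case: (a \in A); case: (b \in A); case: (c \in A).
Qed.

Lemma no_5 a b c d e : diff_bipartite G -> diff_adj G a b -> diff_adj G b c ->
  diff_adj G c d -> diff_adj G d e -> diff_adj G e a -> False.
Proof.
case=> A [_ HA] ab bc cd de ea.
move: (HA _ _ ab) (HA _ _ bc) (HA _ _ cd) (HA _ _ de) (HA _ _ ea).
by case: (a \in A); case: (b \in A); case: (c \in A); case: (d \in A); case: (e \in A).
Qed.

End Aux.

Lemma centC (gT : finGroupType) (G : {group gT}) z x : z \in 'Z(G) -> x \in G -> commute z x.
Proof. by case/centerP=> _ h xG; apply: h. Qed.

Lemma elt_s_t' (gT : finGroupType) (s t : nat) (u : gT) : s != t -> s.-elt u -> t^'.-elt u.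
Proof.
move=> st; apply: sub_p_elt => n; rewrite !inE; move=> /eqP ->; by [].
Qed.

Lemma prime_elt (gT : finGroupType) (s : nat) (u : gT) : prime s -> #[u] = s -> s.-elt u.
Proof. by move=> ps ou; rewrite /p_elt ou pnat_id. Qed.

Lemma in_cycM (gT : finGroupType) (u v : gT) : commute u v -> coprime #[u] #[v] ->
  (u \in <[u * v]>) && (v \in <[u * v]>).
Proof.
move=> cuv co; rewrite cycleM //.
apply/andP; split.
  by have := mem_mulg (cycle_id u) (group1 <[v]>); rewrite mulg1.
by have := mem_mulg (group1 <[u]>) (cycle_id v); rewrite mul1g.
Qed.

Lemma sl (gT : finGroupType) (s : nat) (w x c : gT) : prime s -> x \in <[w]> -> c \in <[w]> ->
  s.-elt x -> x != 1 -> #[c] = s -> c \in <[x]>.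
Proof.
move=> ps xw cw sx x1 oc; rewrite -cycle_subG.
rewrite -(cardSg_cyclic (G:=<[w]>%G) (H:=<[c]>%G) (K:=<[x]>%G) (cycle_cyclic w)) /= ?cycle_subG //.
rewrite -/(order c) -/(order x) oc.
have [k ek] := p_natP sx.
case: k ek => [|k] ek.
  by move: x1; rewrite -order_eq1 ek.
by rewrite ek expnS dvdn_mulr.
Qed.

Section StepB.
Variables (gT : finGroupType) (G : {group gT}) (bip : diff_bipartite G).
Variables (s t : nat) (ps : prime s) (pt : prime t) (st : s != t).
Variables (cs ct : gT) (csZ : cs \in 'Z(G)) (ctZ : ct \in 'Z(G)).
Hypotheses (ocs : #[cs] = s) (oct : #[ct] = t).

Let csG : cs \in G. Proof. by move: csZ; apply: subsetP; apply: center_sub. Qed.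
Let ctG : ct \in G. Proof. by move: ctZ; apply: subsetP; apply: center_sub. Qed.
Let ct_s' : s^'.-elt ct.
Proof. by apply: (@elt_s_t' _ t s); [rewrite eq_sym | exact: prime_elt]. Qed.
Let cs_s : s.-elt cs. Proof. exact: prime_elt. Qed.
Let ct1 : ct != 1. Proof. by rewrite -order_eq1 oct; case: (t) pt => [|[]]. Qed.
Let cs1 : cs != 1. Proof. by rewrite -order_eq1 ocs; case: (s) ps => [|[]]. Qed.

Lemma partS u : u \in G -> s.-elt u -> (u * ct).`_s = u.
Proof.
move=> uG su; rewrite consttM; last by apply: commute_sym; apply: (centC ctZ).
by rewrite (constt_p_elt su) (constt1P ct_s') mulg1.
Qed.

Lemma adjT u v : u \in G -> v \in G -> s.-elt u -> s.-elt v ->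
  u \notin <[v]> -> v \notin <[u]> -> diff_adj G (u * ct) (v * ct).
Proof.
move=> uG vG su sv nuv nvu.
have cu : commute u ct by apply: commute_sym; apply: (centC ctZ).
have cv : commute v ct by apply: commute_sym; apply: (centC ctZ).
apply: (adjI (w := ct)) => //; [exact: groupM | exact: groupM | | | | ].
- by case/andP: (in_cycM cu (pnat_coprime su ct_s')).
- by case/andP: (in_cycM cv (pnat_coprime sv ct_s')).
- by apply/negP => h; case/negP: nuv; move: (proj_mem s h); rewrite !partS.
- by apply/negP => h; case/negP: nvu; move: (proj_mem s h); rewrite !partS.
Qed.

Lemma B1 x : x \in G -> s.-elt x -> x != 1 -> cs \in <[x]>.
Proof.
move=> xG sx x1; apply/negPn/negP => ncs.
have cxs : commute x cs by apply: commute_sym; apply: (centC csZ).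
have nx : x \notin <[cs]>.
  by apply: contra ncs => xc; apply: (sl ps xc (cycle_id _)).
pose y := x * cs.
have sy : s.-elt y by apply: p_eltM.
have yG : y \in G by rewrite groupM.
have ncy : cs \notin <[y]>.
  apply/negP => cy; have xy : x \in <[y]>.
    have -> : x = y * cs^-1 by rewrite /y mulgK.
    by rewrite groupM ?groupV ?cycle_id.
  by case/negP: ncs; apply: (sl ps xy cy).
have nxy : x \notin <[y]>.
  apply/negP => xy; have cy : cs \in <[y]>.
    have -> : cs = x^-1 * y by rewrite /y mulKg.
    by rewrite groupM ?groupV ?cycle_id.
  by case/negP: ncs; apply: (sl ps xy cy).
have nyx : y \notin <[x]>.
  apply: contra ncs => yx.
  have -> : cs = x^-1 * y by rewrite /y mulKg.
  by rewrite groupM ?groupV ?cycle_id.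
have nyc : y \notin <[cs]>.
  apply: contra nx => yc.
  have -> : x = y * cs^-1 by rewrite /y mulgK.
  by rewrite groupM ?groupV ?cycle_id.
apply: (no_tri bip (a := x * ct) (b := cs * ct) (c := y * ct)).
- by apply: adjT.
- by apply: adjT.
- by apply: adjT.
Qed.


Lemma B2 x y : x \in G -> y \in G -> s.-elt x -> s.-elt y ->
  (x \in <[y]>) || (y \in <[x]>).
Proof.
move=> xG yG sx sy; apply/negPn/negP; rewrite negb_or => /andP[nxy nyx].
have x1 : x != 1 by apply: contraNneq nxy => ->; apply: group1.
have y1 : y != 1 by apply: contraNneq nyx => ->; apply: group1.
have csx := B1 xG sx x1; have csy := B1 yG sy y1.
have ccs : commute cs ct by apply: commute_sym; apply: (centC ctZ).
have [csC ctC] := andP (in_cycM ccs (pnat_coprime cs_s ct_s')).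
have CG : cs * ct \in G by rewrite groupM.
have ct_t : t.-elt ct by exact: prime_elt.
have Ct : (cs * ct).`_t = ct.
  rewrite consttM // (constt_p_elt ct_t).
  by rewrite (constt1P (elt_s_t' st cs_s)) mul1g.
have adjC z : z \in G -> s.-elt z -> cs \in <[z]> -> 
   (forall w, w \in G -> s.-elt w -> z \in <[cs]> -> False) ->
   diff_adj G z (cs * ct).
  move=> zG sz csz H.
  apply: (adjI (w := cs)) => //.
    apply/negP => zC; have := proj_mem s zC.
    rewrite (constt_p_elt sz) consttM // (constt_p_elt cs_s) (constt1P ct_s') mulg1.
    by move=> zc; apply: (H z).
  apply/negP => Cz; have := proj_mem t Cz.
  by rewrite Ct (constt1P (elt_s_t' st sz)) cycle1 inE (negPf ct1).
have Hx : forall w, w \in G -> s.-elt w -> x \in <[cs]> -> False.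
  move=> _ _ _ xc; case/negP: nxy; rewrite -cycle_subG.
  by apply: subset_trans (_ : <[cs]> \subset _); rewrite cycle_subG.
have Hy : forall w, w \in G -> s.-elt w -> y \in <[cs]> -> False.
  move=> _ _ _ yc; case/negP: nyx; rewrite -cycle_subG.
  by apply: subset_trans (_ : <[cs]> \subset _); rewrite cycle_subG.
apply: (no_tri bip (a := x) (b := y) (c := cs * ct)).
- by apply: (adjI (w := cs)).
- exact: adjC.
- by apply: diff_adj_sym; apply: adjC.
Qed.


Lemma C_max : exists2 g, g \in G & s.-elt g /\ forall x, x \in G -> s.-elt x -> x \in <[g]>.
Proof.
pose P := [pred x | (x \in G) && s.-elt x].
have P1 : P 1 by rewrite /= group1 p_elt1.
case: (arg_maxnP (fun x => #[x]) P1) => g /andP[gG sg] gmax.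
exists g => //; split => // x xG sx.
case/orP: (B2 xG gG sx sg) => // gx.
have sub : <[g]> \subset <[x]> by rewrite cycle_subG.
have : <[g]> == <[x]>.
  by rewrite eqEcard sub /=; apply: gmax; rewrite /= xG sx.
by move/eqP => ->; apply: cycle_id.
Qed.

End StepB.

Lemma cop a b : prime a -> prime b -> a != b -> coprime a b.
Proof. by move=> pa pb ab; rewrite prime_coprime // dvdn_prime2 // ab. Qed.

Section Num.
Variables (p q : nat) (pp : prime p) (pq' : prime q) (pq : p != q).

Lemma logpq i j : logn p (p ^ i * q ^ j) = i /\ logn q (p ^ i * q ^ j) = j.
Proof.
have p0 := prime_gt0 pp; have q0 := prime_gt0 pq'.
rewrite !lognM ?expn_gt0 ?p0 ?q0 // !lognX !logn_prime // !eqxx.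
by rewrite [q == p]eq_sym (negPf pq) !muln0 !muln1 addn0.
Qed.

Lemma ndv i j k l : (k < i) || (l < j) -> ~~ (p ^ i * q ^ j %| p ^ k * q ^ l).
Proof.
move=> h; apply/negP => dv.
have n0 : 0 < p ^ k * q ^ l by rewrite muln_gt0 !expn_gt0 !prime_gt0.
have := dvdn_leq_log p n0 dv; have := dvdn_leq_log q n0 dv.
have [-> ->] := logpq i j; have [-> ->] := logpq k l.
by move=> h1 h2; move/orP: h => [] h3; lia.
Qed.
End Num.

Lemma nm (gT : finGroupType) p q (x y : gT) i j k l : prime p -> prime q -> p != q ->
  #[x] = (p ^ i * q ^ j)%N -> #[y] = (p ^ k * q ^ l)%N -> (k < i) || (l < j) ->
  x \notin <[y]>.
Proof.
move=> pp pq' pq ox oy h; apply/negP => /ord_mem; rewrite ox oy.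
by apply/negP; apply: ndv.
Qed.

Lemma five (gT : finGroupType) (G : {group gT}) p q (a c : gT) :
  diff_bipartite G -> prime p -> prime q -> p != q ->
  a \in G -> c \in G -> commute a c -> #[a] = (p ^ 2)%N -> #[c] = (q ^ 2)%N -> False.
Proof.
move=> bip pp pq' pq aG cG cac oa oc.
pose b := a ^+ p; pose d := c ^+ q.
have ob : #[b] = (p ^ 1)%N by rewrite /b -[p in a ^+ p]expn1 (orderXexp 1 oa).
have od : #[d] = (q ^ 1)%N by rewrite /d -[q in c ^+ q]expn1 (orderXexp 1 oc).
have bG : b \in G by rewrite groupX.
have dG : d \in G by rewrite groupX.
have cbd : commute b d by apply: commuteX2.
have cad : commute a d by rewrite -[a]expg1; apply: commuteX2.
have cbc : commute b c by rewrite -[c]expg1; apply: commuteX2.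
have co : coprime p q by apply: cop.
have c1 : coprime #[b] #[d] by rewrite ob od !expn1.
have c2 : coprime #[a] #[d] by rewrite oa od coprimeXl // expn1.
have c3 : coprime #[b] #[c] by rewrite ob oc expn1 coprimeXr.
have [bB dB] := andP (in_cycM cbd c1).
have [aD dD] := andP (in_cycM cad c2).
have [bE cE] := andP (in_cycM cbc c3).
have oA : #[a] = (p ^ 2 * q ^ 0)%N by rewrite oa muln1.
have oB : #[b * d] = (p ^ 1 * q ^ 1)%N.
  by rewrite orderM // ob od !expn1.
have oC : #[c] = (p ^ 0 * q ^ 2)%N by rewrite oc mul1n.
have oD : #[a * d] = (p ^ 2 * q ^ 1)%N.
  by rewrite orderM // oa od expn1.
have oE : #[b * c] = (p ^ 1 * q ^ 2)%N.
  by rewrite orderM // ob oc expn1.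
have b1 : b != 1 by rewrite -order_eq1 ob expn1; case: (p) pp => [|[]].
have d1 : d != 1 by rewrite -order_eq1 od expn1; case: (q) pq' => [|[]].
have ba : b \in <[a]> by apply: mem_cycle.
have dc : d \in <[c]> by apply: mem_cycle.
have bD : b \in <[a * d]>.
  by move: ba; apply: subsetP; rewrite cycle_subG.
have BG : b * d \in G by rewrite groupM.
have DG : a * d \in G by rewrite groupM.
have EG : b * c \in G by rewrite groupM.
apply: (no_5 bip (a := a) (b := b * d) (c := c) (d := a * d) (e := b * c)).
- apply: (adjI (w := b)) => //.
  + by apply: (nm pp pq' pq oA oB).
  + by apply: (nm pp pq' pq oB oA).
- apply: (adjI (w := d)) => //.
  + by apply: (nm pp pq' pq oB oC).
  + by apply: (nm pp pq' pq oC oB).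
- apply: (adjI (w := d)) => //.
  + by apply: (nm pp pq' pq oC oD).
  + by apply: (nm pp pq' pq oD oC).
- apply: (adjI (w := b)) => //.
  + by apply: (nm pp pq' pq oD oE).
  + by apply: (nm pp pq' pq oE oD).
- apply: (adjI (w := b)) => //.
  + by apply: (nm pp pq' pq oE oA).
  + by apply: (nm pp pq' pq oA oE).
Qed.

Lemma nm2 (gT : finGroupType) (s : nat) (x y : gT) :
  s %| #[x] -> ~~ (s %| #[y]) -> x \notin <[y]>.
Proof. by move=> h1 h2; apply/negP => /ord_mem h; case/negP: h2; apply: dvdn_trans h. Qed.

Lemma ndvd3 s a b : prime s -> prime a -> prime b -> s != a -> s != b -> ~~ (s %| a * b).
Proof. by move=> ps pa pb sa sb; rewrite Euclid_dvdM // !dvdn_prime2 // (negPf sa) (negPf sb). Qed.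

Lemma backward (gT : finGroupType) (G : {group gT}) p q cp cq :
  diff_bipartite G -> prime p -> prime q -> p != q ->
  cp \in 'Z(G) -> cq \in 'Z(G) -> #[cp] = p -> #[cq] = q ->
  exists p q a : nat, [/\ prime p, prime q, p != q, 1 <= a &
      G \isog Zp (p ^ a * q)].
Proof.
move=> bip pp pq' pq cpZ cqZ ocp ocq.
have qp : q != p by rewrite eq_sym.
have cpG : cp \in G by move: cpZ; apply: subsetP; apply: center_sub.
have cqG : cq \in G by move: cqZ; apply: subsetP; apply: center_sub.
have cp1 : cp != 1 by rewrite -order_eq1 ocp; case: (p) pp => [|[]].
have cq1 : cq != 1 by rewrite -order_eq1 ocq; case: (q) pq' => [|[]].
have SA : forall r, prime r -> r %| #|G| -> (r == p) || (r == q).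
  move=> r pr rG; apply/negPn/negP; rewrite negb_or => /andP[rp rq].
  have [y yG oy] := Cauchy pr rG.
  have y1 : y != 1 by rewrite -order_eq1 oy; case: (r) pr => [|[]].
  have cpq : commute cp cq := centC cpZ cqG.
  have cqy : commute cq y := centC cqZ yG.
  have cpy : commute cp y := centC cpZ yG.
  have co1 : coprime #[cp] #[cq] by rewrite ocp ocq cop.
  have co2 : coprime #[cq] #[y] by rewrite ocq oy cop // eq_sym.
  have co3 : coprime #[cp] #[y] by rewrite ocp oy cop // eq_sym.
  have [pu qu] := andP (in_cycM cpq co1).
  have [qv yv] := andP (in_cycM cqy co2).
  have [pw yw] := andP (in_cycM cpy co3).
  have ou : #[cp * cq] = (p * q)%N by rewrite orderM // ocp ocq.
  have ov : #[cq * y] = (q * r)%N by rewrite orderM // ocq oy.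
  have ow : #[cp * y] = (p * r)%N by rewrite orderM // ocp oy.
  have uG : cp * cq \in G by rewrite groupM.
  have vG : cq * y \in G by rewrite groupM.
  have wG : cp * y \in G by rewrite groupM.
  have pr' : p != r by rewrite eq_sym.
  have qr' : q != r by rewrite eq_sym.
  apply: (no_tri bip (a := cp * cq) (b := cq * y) (c := cp * y)).
  - apply: (adjI (w := cq)) => //.
    + by apply: (nm2 (s := p)); [rewrite ?ou ?ov ?ow dvdn_mulr | rewrite ?ou ?ov ?ow ndvd3].
    + by apply: (nm2 (s := r)); [rewrite ?ou ?ov ?ow dvdn_mull | rewrite ?ou ?ov ?ow ndvd3].
  - apply: (adjI (w := y)) => //.
    + by apply: (nm2 (s := q)); [rewrite ?ou ?ov ?ow dvdn_mulr | rewrite ?ou ?ov ?ow ndvd3].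
    + by apply: (nm2 (s := p)); [rewrite ?ou ?ov ?ow dvdn_mulr | rewrite ?ou ?ov ?ow ndvd3].
  - apply: (adjI (w := cp)) => //.
    + by apply: (nm2 (s := r)); [rewrite ?ou ?ov ?ow dvdn_mull | rewrite ?ou ?ov ?ow ndvd3].
    + by apply: (nm2 (s := q)); [rewrite ?ou ?ov ?ow dvdn_mull | rewrite ?ou ?ov ?ow ndvd3].
have [gp gpG [sgp Hp]] := C_max bip pp pq' pq cpZ cqZ ocp ocq.
have [gq gqG [sgq Hq]] := C_max bip pq' pp qp cqZ cpZ ocq ocp.
have comm : commute gp gq.
  pose k := [~ gp, gq].
  have k1 : k \in <[gp]>.
    rewrite /k /commg groupM ?groupV ?cycle_id //.
    by apply: Hp; rewrite ?groupJ // p_eltJ.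
  have k2 : k \in <[gq]>.
    rewrite /k commgEr groupM ?cycle_id //.
    by apply: Hq; rewrite ?groupJ ?groupV // p_eltJ p_eltV.
  have kp := mem_p_elt sgp k1; have kq := mem_p_elt sgq k2.
  apply/commgP; rewrite -order_eq1; apply/eqP; apply: (pnat_1 kp).
  exact: (elt_s_t' qp kq).
have cog : coprime #[gp] #[gq] := pnat_coprime sgp (elt_s_t' qp sgq).
pose g := gp * gq.
have gG : g \in G by rewrite groupM.
have GG : G :=: <[g]>.
  apply/eqP; rewrite eqEsubset cycle_subG gG andbT; apply/subsetP => x xG.
  have xsub : <[x]> \subset G by rewrite cycle_subG.
  rewrite /g cycleM // -(consttC p x) mem_mulg //.
    by apply: Hp; [apply: (subsetP xsub); apply: cycle_constt | apply: p_elt_constt].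
  have xpG : x.`_p^' \in G by apply: (subsetP xsub); apply: cycle_constt.
  apply: Hq => //; rewrite /p_elt.
  apply: (sub_in_pnat (pi := p^')); last exact: p_elt_constt.
  move=> r; rewrite mem_primes => /and3P[pr _ rdv].
  have := SA r pr (dvdn_trans rdv (order_dvdG xpG)).
  by rewrite !inE; case/orP => /eqP ->; rewrite ?eqxx.
have [al eal] := p_natP sgp; have [be ebe] := p_natP sgq.
have og : #[g] = (p ^ al * q ^ be)%N by rewrite orderM // eal ebe.
have al1 : 0 < al.
  have := ord_mem (Hp cp cpG (prime_elt pp ocp)); rewrite ocp eal.
  by case: (al) => [|//]; rewrite expn0 dvdn1 => /eqP e; move: pp; rewrite e.
have be1 : 0 < be.
  have := ord_mem (Hq cq cqG (prime_elt pq' ocq)); rewrite ocq ebe.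
  by case: (be) => [|//]; rewrite expn0 dvdn1 => /eqP e; move: pq'; rewrite e.
have iso : G \isog Zp #[g].
  by rewrite isog_sym; have := Zp_isog g; rewrite -GG.
case: (eqVneq al 1%N) => [a1 | a1].
  exists q, p, be; split => //.
  by move: iso; rewrite og a1 expn1 mulnC.
case: (eqVneq be 1%N) => [b1 | b1].
  exists p, q, al; split => //.
  by move: iso; rewrite og b1 expn1.
have al2 : (2 <= al)%N by case: (al) al1 a1 => [|[]].
have be2 : (2 <= be)%N by case: (be) be1 b1 => [|[]].
have oa : #[gp ^+ (p ^ (al - 2))] = (p ^ 2)%N by rewrite (orderXexp _ eal) subKn.
have oc : #[gq ^+ (q ^ (be - 2))] = (q ^ 2)%N by rewrite (orderXexp _ ebe) subKn.
exfalso; apply: (five bip pp pq' pq _ _ (commuteX2 _ _ comm) oa oc); exact: groupX.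
Qed.

Lemma cycZp n : cyclic (Zp n).
Proof.
rewrite /Zp; case: ifP => _; last exact: cyclic1.
rewrite Zp_cycle; apply: cycle_cyclic.
Qed.

Lemma shape p q a d : prime p -> prime q -> p != q -> d %| p ^ a * q ->
  (exists i, d = (p ^ i)%N) \/ (exists i, d = (q * p ^ i)%N).
Proof.
move=> pp pq' pq dv.
case: (boolP (q %| d)) => qd.
  right; have e := divnK qd.
  move: dv; rewrite -e dvdn_pmul2r ?prime_gt0 // => /dvdn_pfactor[] // i _ ei.
  by exists i; rewrite ei mulnC.
left; have co : coprime d q by rewrite coprime_sym prime_coprime.
move: dv; rewrite Gauss_dvdl // => /dvdn_pfactor[] // i _ ei; by exists i.
Qed.

Lemma NT p q a d1 d2 : prime p -> prime q -> p != q ->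
  d1 %| p ^ a * q -> d2 %| p ^ a * q -> p.-nat d1 = p.-nat d2 ->
  (d1 %| d2) || (d2 %| d1).
Proof.
move=> pp pq' pq h1 h2 e.
have nq : forall i, p.-nat (q * p ^ i)%N = false.
  by move=> i; rewrite pnatM pnatE // inE eq_sym (negPf pq).
have np : forall i, p.-nat (p ^ i)%N by move=> i; rewrite pnatX pnat_id.
move: e; case: (shape pp pq' pq h1) => [][i ->]; case: (shape pp pq' pq h2) => [][j ->];
  rewrite ?nq ?np // => e.
- by case: (leqP i j) => h; [rewrite dvdn_exp2l | rewrite orbC dvdn_exp2l // ltnW].
rewrite !dvdn_pmul2l ?prime_gt0 //.
by case: (leqP i j) => h; [rewrite dvdn_exp2l | rewrite orbC dvdn_exp2l // ltnW].
Qed.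

Lemma forward (gT : finGroupType) (G : {group gT}) p q a :
  prime p -> prime q -> p != q -> G \isog Zp (p ^ a * q) -> diff_bipartite G.
Proof.
move=> pp pq' pq iso.
have n0 : 0 < p ^ a * q by rewrite muln_gt0 expn_gt0 !prime_gt0.
have cG : cyclic G by rewrite (isog_cyclic iso) cycZp.
have oG : #|G| = (p ^ a * q)%N by rewrite (card_isog iso) card_Zp.
exists [set x in diff_vertices G | p.-elt x]; split.
  by apply/subsetP => x; rewrite inE => /andP[].
move=> x y xy.
have yx := diff_adj_sym xy.
have xV : x \in diff_vertices G.
  rewrite inE; case/andP: (xy) => /and4P[-> _ _ _] _ /=; apply/existsP; by exists y.
have yV : y \in diff_vertices G.
  rewrite inE; case/andP: (yx) => /and4P[-> _ _ _] _ /=; apply/existsP; by exists x.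
have eA z : z \in diff_vertices G -> (z \in [set x in diff_vertices G | p.-elt x]) = p.-elt z.
  by move=> zV; rewrite [in LHS]inE zV.
rewrite (eA x xV) (eA y yV); apply/negP => /eqP e.
case/andP: xy => /and4P[xG yG xy' _]; rewrite /pg_adj xG yG /=.
have h1 : #[x] %| p ^ a * q by rewrite -oG order_dvdG.
have h2 : #[y] %| p ^ a * q by rewrite -oG order_dvdG.
have h := NT pp pq' pq h1 h2 e.
have sx : <[x]> \subset G by rewrite cycle_subG.
have sy : <[y]> \subset G by rewrite cycle_subG.
move: h; rewrite /order.
rewrite (cardSg_cyclic (H := <[x]>%G) (K := <[y]>%G) cG) //.
rewrite (cardSg_cyclic (H := <[y]>%G) (K := <[x]>%G) cG) //= !cycle_subG.
by case/orP => ->; rewrite ?orbT xy'.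
Qed.

Theorem theorem7p5 (gT : finGroupType) (G : {group gT}) :
  1 < size (primes #|'Z(G)|) ->
  (diff_bipartite G <->
   exists p q a : nat, [/\ prime p, prime q, p != q, 1 <= a &
      G \isog Zp (p ^ a * q)]).
Proof.
move=> H.
have [p [q [pZ qZ pq]]] : exists p q, [/\ p \in primes #|'Z(G)|, q \in primes #|'Z(G)| & p != q].
  move: H (primes_uniq #|'Z(G)|); case: (primes _) => [|p [|q s]] // _ /andP[].
  rewrite inE negb_or => /andP[pq _] _; exists p, q; split => //.
    by rewrite inE eqxx.
  by rewrite !inE eqxx orbT.
move: pZ qZ; rewrite !mem_primes => /and3P[pp _ pd] /and3P[pq' _ qd].
have [cp cpZ ocp] := Cauchy (G := 'Z(G)%G) pp pd.
have [cq cqZ ocq] := Cauchy (G := 'Z(G)%G) pq' qd.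
split.
  by move=> bip; apply: (backward bip pp pq' pq cpZ cqZ ocp ocq).
by case=> p1 [q1 [a [pp1 pq1 pn1 _ iso]]]; apply: (forward pp1 pq1 pn1 iso).
Qed.
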